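(* Let $H=[H_X\,|\,H_Z]$ be the $(n-k)\times 2n$ binary check matrix of an $[[n,k,d]]$ stabilizer code. By row operations (Gaussian elimination) and a reordering of the qubits, $H$ can be written in the standard form \[ H=\left[\begin{array}{cc|cc} A & I_{s\times s} & D & 0\\ C & 0 & B & I_{s\times s}\\ E & 0 & F & 0\end{array}\right],\qquad 0\le s\le n-k , \] where $A,B,C,D,E,F$ are binary matrices of appropriate sizes. Then for every integer $c$ with $0\le c\le s$, the matrix obtained from $H$ by deleting the last $c$ columns of $H_X$ and the last $c$ columns of $H_Z$ is the check matrix of the simplified stabilizer group of an $[[n-c,k,d;c]]_{AB}$ EAQEC code; in particular this code can correct any Pauli error of weight at most $\lfloor\frac{d-1}{2}\rfloor$ acting on Alice's $n-c$ qubits together with Bob's $c$ qubits. Moreover, if the stabilizer code is nondegenerate, the elimination can be carried out so that the resulting $s$ satisfies \[ d-1\le s\le \left\lfloor \tfrac{n-k}{2}\right\rfloor . \]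
   Context: Pauli operators on $n$ qubits are considered up to phase, i.e. as tensor products $M_1\otimes\cdots\otimes M_n$ with $M_j\in\{I,X,Y,Z\}$; the weight of such an operator is the number of non-identity factors. An $[[n,k,d]]$ stabilizer code is defined by an abelian subgroup $\mathcal S$ of the $n$-qubit Pauli group not containing $-I$, with $n-k$ independent generators; $d$ is the minimum weight of an element of $\mathcal N(\mathcal S)\setminus\mathcal S$, where $\mathcal N(\mathcal S)$ is the normalizer of $\mathcal S$ in the Pauli group. The check matrix has one row per generator; a Pauli $X^{a}Z^{b}$ (with $a,b\in\{0,1\}^n$) corresponds to the row $[a\,|\,b]$. The code is nondegenerate if every non-identity element of $\mathcal N(\mathcal S)$ has weight at least $d$. An $[[n',k,d;c]]$ entanglement-assisted (EAQEC) code: Alice and Bob share $c$ Bell pairs $\frac{1}{\sqrt2}(|00\rangle+|11\rangle)$; Alice encodes $k$ qubits into $n'$ qubits (including her halves of the ebits) with a Clifford unitary. It is specified by a simplified stabilizer group $\mathcal S'$ on Alice's $n'$ qubits generated by operators $g'_1,h'_1,\dots,g'_c,h'_c,g'_{c+1},\dots,g'_{n'-k-c}$, where $g'_i,h'_i$ anticommute for $i\le c$ and all other pairs of generators commute; the encoded state on all $n'+c$ qubits is stabilized by $g'_i\otimes Z_i$, $h'_i\otimes X_i$ ($i\le c$, the $Z_i,X_i$ acting on Bob's $i$-th qubit) and $g'_j\otimes I$ ($j>c$). Its minimum distance is the minimum weight of an element of $\mathcal N(\mathcal S')\setminus\mathcal S_I$, where $\mathcal S_I=\langle g'_{c+1},\dots,g'_{n'-k-c}\rangle$.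 The subscript $AB$ indicates that the stabilizer group on all $n'+c$ qubits (Alice's and Bob's) is that of a standard $[[n'+c,k,d]]$ stabilizer code, so that errors on Bob's qubits are corrected as well as those on Alice's. *)

(* Defs.v *)
(* Binary (phase-free) symplectic representation of Pauli
   operators: a Pauli X^a Z^b on N qubits is the row vector [a | b] of type
   'rV['F_2]_(N + N). *)
From HB Require Import structures.
From mathcomp Require Import all_boot all_order fingroup perm all_algebra.
Set Implicit Arguments.
Unset Strict Implicit.
Unset Printing Implicit Defensive.
Import GRing.Theory.
Local Open Scope ring_scope.

Definition pweight (N : nat) (u : 'rV['F_2]_(N + N)) : nat :=
  #|[set j : 'I_N | (lsubmx u 0 j != 0) || (rsubmx u 0 j != 0)]|.

(* symplectic product: 0 iff the two Paulis commute *)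
Definition symp (N : nat) (u v : 'rV['F_2]_(N + N)) : 'F_2 :=
  \sum_(j < N) (lsubmx u 0 j * rsubmx v 0 j + rsubmx u 0 j * lsubmx v 0 j).

Definition in_stab (m N : nat) (H : 'M['F_2]_(m, N + N)) (u : 'rV['F_2]_(N + N)) : Prop :=
  (u <= H)%MS.

Definition in_norm (m N : nat) (H : 'M['F_2]_(m, N + N)) (u : 'rV['F_2]_(N + N)) : Prop :=
  forall i : 'I_m, symp u (row i H) = 0.

Definition min_dist (m N : nat) (H : 'M['F_2]_(m, N + N)) (d : nat) : Prop :=
  (exists u, in_norm H u /\ ~ in_stab H u /\ pweight u = d) /\
  (forall u, in_norm H u -> ~ in_stab H u -> (d <= pweight u)%N).

Definition stab_code (N k d : nat) (m : nat) (H : 'M['F_2]_(m, N + N)) : Prop :=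
  [/\ m = (N - k)%N, (k <= N)%N, row_free H,
      (forall i j : 'I_m, symp (row i H) (row j H) = 0) & min_dist H d].
Arguments stab_code N k d {m} H.

Definition nondegenerate_code (m N : nat) (H : 'M['F_2]_(m, N + N)) (d : nat) : Prop :=
  forall u, in_norm H u -> u != 0 -> (d <= pweight u)%N.

(* the code corrects every Pauli error of weight <= t (Knill-Laflamme for
   stabilizer codes: E1^dag E2 is never in N(S) \ S) *)
Definition corrects (m N : nat) (H : 'M['F_2]_(m, N + N)) (t : nat) : Prop :=
  forall e1 e2 : 'rV['F_2]_(N + N), (pweight e1 <= t)%N -> (pweight e2 <= t)%N ->
    in_norm H (e1 + e2) -> in_stab H (e1 + e2).

Definition qperm (m n : nat) (p : 'S_n) (H : 'M['F_2]_(m, n + n)) : 'M['F_2]_(m, n + n) :=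
  row_mx (col_perm p (lsubmx H)) (col_perm p (rsubmx H)).

(* standard form with parameter s:
     [ A I_s | D 0   ]
     [ C 0   | B I_s ]
     [ E 0   | F 0   ]   (row blocks of sizes s, s, m - 2s;
                          column blocks of sizes n - s, s in each half) *)
Definition std_form (m n : nat) (s : nat) (H : 'M['F_2]_(m, n + n)) : Prop :=
  (2 * s <= m)%N /\
  forall (i : 'I_m) (j : 'I_n), (n - s <= j)%N ->
    lsubmx H i j = (i == (j - (n - s))%N :> nat)%:R /\
    rsubmx H i j = ((s <= i)%N && ((i - s)%N == (j - (n - s))%N))%:R.

Definition del_last (m n : nat) (c : nat) (H : 'M['F_2]_(m, n + n))
  : 'M['F_2]_(m, (n - c) + (n - c)) :=
  row_mx (\matrix_(i < m, j < n - c) lsubmx H i (widen_ord (leq_subr c n) j))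
         (\matrix_(i < m, j < n - c) rsubmx H i (widen_ord (leq_subr c n) j)).

(* Simplified stabilizer generators, listed as rows of G in the order
   g'_1..g'_c, h'_1..h'_c, g'_{c+1}, ... :
   g'_i and h'_i anticommute, all other pairs commute. *)
Definition ea_simplified (m n' : nat) (c : nat) (G : 'M['F_2]_(m, n' + n')) : Prop :=
  (2 * c <= m)%N /\
  forall i j : 'I_m, symp (row i G) (row j G) =
    (((i < c)%N && (j == (i + c)%N :> nat)) || ((j < c)%N && (i == (j + c)%N :> nat)))%:R.

(* Stabilizer on Alice's n' qubits followed by Bob's c qubits:
   g'_i (x) Z_i, h'_i (x) X_i (i <= c), g'_j (x) I (j > c). *)
Definition ea_ext (m n' : nat) (c : nat) (G : 'M['F_2]_(m, n' + n'))
  : 'M['F_2]_(m, (n' + c) + (n' + c)) :=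
  row_mx (row_mx (lsubmx G) (\matrix_(i < m, j < c) (i == (c + j)%N :> nat)%:R))
         (row_mx (rsubmx G) (\matrix_(i < m, j < c) (i == j :> nat)%:R)).

(* G (a check matrix on n' qubits) is the check matrix of the simplified
   stabilizer group of an [[n',k,d;c]]_AB EAQEC code, the generators being
   the rows of T *m G for an invertible row transformation T. *)
Definition eaqec_AB_via (m n' : nat) (k d c : nat) (G : 'M['F_2]_(m, n' + n'))
  (T : 'M['F_2]_m) : Prop :=
  [/\ T \in unitmx, ea_simplified c (T *m G) & stab_code (n' + c) k d (ea_ext c (T *m G))].
Arguments eaqec_AB_via {m} n' k d c G T.

(* Main.v *)
Require Import Defs.
From HB Require Import structures.
From mathcomp Require Import all_boot all_order fingroup perm all_algebra zify.
Set Implicit Arguments.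
Unset Strict Implicit.
Unset Printing Implicit Defensive.
Import GRing.Theory.
Local Open Scope ring_scope.

Lemma F2_opp (x : 'F_2) : - x = x.
Proof. case: x => [[|[|]]] // ?; by apply/val_inj. Qed.

Lemma F2_add_eq0 (x y : 'F_2) : x + y = 0 -> x = y.
Proof. by move/eqP; rewrite addr_eq0 F2_opp => /eqP. Qed.

Lemma sum_delta (T : finType) (F G : T -> 'F_2) (k0 : T) :
  (forall k, k != k0 -> G k = 0) -> G k0 = 1 -> \sum_k F k * G k = F k0.
Proof.
move=> H0 H1; rewrite (bigD1 k0) //= big1 ?addr0 ?H1 ?mulr1 // => k /H0 ->.
by rewrite mulr0.
Qed.

Lemma sum_delta_eq (T : finType) (F : T -> 'F_2) (k0 : T) :
  \sum_k F k * (k == k0)%:R = F k0.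
Proof. by apply: sum_delta => [k /negbTE ->|]; rewrite ?eqxx. Qed.

Lemma row0_rV {N : nat} (u : 'rV['F_2]_N) : row 0 u = u.
Proof. by apply/matrixP=> i j; rewrite !mxE ord1. Qed.

Definition Jmx (N : nat) : 'M['F_2]_(N + N) := block_mx 0 1%:M 1%:M 0.

Lemma mulJ (N p : nat) (x : 'M['F_2]_(p, N + N)) :
  x *m Jmx N = row_mx (rsubmx x) (lsubmx x).
Proof.
by rewrite -{1}(hsubmxK x) /Jmx mul_row_block !mulmx0 !mulmx1 addr0 add0r.
Qed.

Lemma sympE (N : nat) (u v : 'rV['F_2]_(N + N)) :
  symp u v = (u *m Jmx N *m v^T) 0 0.
Proof.
rewrite mulJ -[v in v^T](hsubmxK v) tr_row_mx mul_row_col mxE /symp.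
rewrite [in RHS]mxE [X in _ + X]mxE -big_split /=.
apply: eq_bigr => j _; rewrite !mxE addrC; congr (_ + _); by rewrite mulrC.
Qed.

Lemma symp_rows (N p r : nat) (X : 'M['F_2]_(p, N + N)) (Y : 'M['F_2]_(r, N + N)) i j :
  symp (row i X) (row j Y) = (X *m Jmx N *m Y^T) i j.
Proof.
rewrite sympE -row_mul tr_row !mxE; apply: eq_bigr => k _; by rewrite !mxE.
Qed.

Lemma in_normE (m N : nat) (M : 'M['F_2]_(m, N + N)) u :
  in_norm M u <-> u *m Jmx N *m M^T = 0.
Proof.
split => [h|h i].
  apply/matrixP => a i; rewrite ord1 -symp_rows row0_rV h !mxE //.
by rewrite -[u]row0_rV symp_rows h mxE.
Qed.

Lemma JJ (N : nat) : Jmx N *m Jmx N = 1%:M.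
Proof.
by rewrite /Jmx mulmx_block !mulmx0 !mul0mx !mulmx1 !addr0 !add0r scalar_mx_block.
Qed.

Lemma trJ (N : nat) : (Jmx N)^T = Jmx N.
Proof. by rewrite /Jmx tr_block_mx !trmx0 trmx1. Qed.

Definition liftq (N N' : nat) (f : 'I_N' -> 'I_N) (t : 'I_(N' + N')) : 'I_(N + N) :=
  unsplit (match split t with inl j => inl (f j) | inr j => inr (f j) end).

Lemma liftq_l N N' (f : 'I_N' -> 'I_N) j : liftq f (lshift N' j) = lshift N (f j).
Proof. by rewrite /liftq (unsplitK (inl j)). Qed.

Lemma liftq_r N N' (f : 'I_N' -> 'I_N) j : liftq f (rshift N' j) = rshift N (f j).
Proof. by rewrite /liftq (unsplitK (inr j)). Qed.

Lemma liftqK N N' (f : 'I_N' -> 'I_N) (g : 'I_N -> 'I_N') :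
  cancel g f -> cancel (liftq g) (liftq f).
Proof.
move=> gK t; rewrite /liftq unsplitK -[RHS]splitK; by case: (split t) => j; rewrite gK.
Qed.

Lemma liftq_inj N N' (f : 'I_N' -> 'I_N) : injective f -> injective (liftq f).
Proof.
move=> fi t1 t2; rewrite /liftq => /(can_inj unsplitK) h.
apply: (can_inj splitK); move: h.
by case: (split t1) => j1; case: (split t2) => j2 // [] /fi ->.
Qed.

Definition Pmx (N N' : nat) (f : 'I_N' -> 'I_N) : 'M['F_2]_(N + N, N' + N') :=
  \matrix_(a, t) (a == liftq f t)%:R.

Lemma mul_Pmx N N' p (f : 'I_N' -> 'I_N) (X : 'M['F_2]_(p, N + N)) i t :
  (X *m Pmx f) i t = X i (liftq f t).
Proof.
rewrite mxE -[RHS](sum_delta_eq (fun a => X i a)); apply: eq_bigr => a _; by rewrite mxE.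
Qed.

Lemma lsub_P N N' (f : 'I_N' -> 'I_N) (x : 'rV['F_2]_(N + N)) j :
  lsubmx (x *m Pmx f) 0 j = lsubmx x 0 (f j).
Proof. by rewrite [LHS]mxE mul_Pmx liftq_l mxE. Qed.

Lemma rsub_P N N' (f : 'I_N' -> 'I_N) (x : 'rV['F_2]_(N + N)) j :
  rsubmx (x *m Pmx f) 0 j = rsubmx x 0 (f j).
Proof. by rewrite [LHS]mxE mul_Pmx liftq_r mxE. Qed.

Lemma PmxK N N' (f : 'I_N' -> 'I_N) (g : 'I_N -> 'I_N') :
  cancel g f -> Pmx f *m Pmx g = 1%:M.
Proof.
move=> gK; apply/matrixP => a b; rewrite mul_Pmx !mxE liftqK //.
Qed.

Lemma symp_P N N' (f : 'I_N' -> 'I_N) (g : 'I_N -> 'I_N') :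
  cancel f g -> cancel g f -> forall x y : 'rV['F_2]_(N + N),
  symp (x *m Pmx f) (y *m Pmx f) = symp x y.
Proof.
move=> fK gK x y; rewrite /symp (reindex f) /=; last first.
  by exists g => ? _.
by apply: eq_bigr => j _; rewrite !lsub_P !rsub_P.
Qed.

Lemma PJP N N' (f : 'I_N' -> 'I_N) (g : 'I_N -> 'I_N') :
  cancel f g -> cancel g f -> Pmx f *m Jmx N' *m (Pmx f)^T = Jmx N.
Proof.
move=> fK gK; apply/matrixP => a b.
rewrite -symp_rows -(mul1mx (Pmx f)) !row_mul (symp_P fK gK).
by rewrite symp_rows trmx1 mulmx1 mul1mx.
Qed.

Lemma pweight_P N N' (f : 'I_N' -> 'I_N) (g : 'I_N -> 'I_N') :
  cancel f g -> cancel g f -> forall x : 'rV['F_2]_(N + N),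
  pweight (x *m Pmx f) = pweight x.
Proof.
move=> fK gK x; rewrite /pweight.
set S := [set j | _ || _]; set S' := [set j | _ || _].
have -> : S' = f @: S.
  apply/setP => j; rewrite inE.
  apply/idP/imsetP => [h|[j' hj' ->]]; last by rewrite inE lsub_P rsub_P in hj'.
  by exists (g j); rewrite ?inE ?lsub_P ?rsub_P ?gK.
by rewrite card_imset //; apply: can_inj fK.
Qed.

Lemma transport m N N' k d (M : 'M['F_2]_(m, N + N)) (R : 'M['F_2]_m)
  (f : 'I_N' -> 'I_N) (g : 'I_N -> 'I_N') :
  cancel f g -> cancel g f -> R \in unitmx -> N = N' ->
  stab_code N k d M -> stab_code N' k d (R *m M *m Pmx f).
Proof.
move=> fK gK Ru eN [hm hk hrf hcom [[u [hu1 [hu2 hu3]]] hlow]].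
set P := Pmx f; set Q := Pmx g.
have PQ : P *m Q = 1%:M := PmxK gK.
have QP : Q *m P = 1%:M := PmxK fK.
have PJ : P *m Jmx N' *m P^T = Jmx N := PJP fK gK.
have MJ : M *m Jmx N *m M^T = 0.
  by apply/matrixP => i j; rewrite -symp_rows hcom mxE.
have key : forall p (u' : 'M['F_2]_(p, N' + N')),
    u' *m Jmx N' *m (R *m M *m P)^T = (u' *m Q) *m Jmx N *m M^T *m R^T.
  move=> p u'; rewrite !trmx_mul -PJ -[u' in LHS]mulmx1 -QP !mulmxA.
  by [].

have unitRT : R^T \in unitmx by rewrite unitmx_tr.
have normE : forall u', in_norm (R *m M *m P) u' <-> in_norm M (u' *m Q).
  move=> u'; rewrite !in_normE key; split => [h|->]; last by rewrite mul0mx.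
  by rewrite -(mulmxK unitRT (_ *m M^T)) h mul0mx.
have stabE : forall u', in_stab (R *m M *m P) u' <-> in_stab M (u' *m Q).
  move=> u'; rewrite /in_stab; split => h.
    apply: submx_trans (submxMr Q h) _.
    by rewrite -(mulmxA (R *m M)) PQ mulmx1 submxMl.
  rewrite -[u']mulmx1 -QP mulmxA; apply: submx_trans (submxMr P h) _.
  have -> : M *m P = invmx R *m (R *m M *m P) by rewrite -!mulmxA mulKmx.
  exact: submxMl.
have wE : forall u', pweight (u' *m Q) = pweight u' := pweight_P gK fK.
split.
- by rewrite hm eN.
- by rewrite -eN.
- have rP : row_free P.
    rewrite /row_free eqn_leq rank_leq_row /=.
    by have := mxrankM_maxl P Q; rewrite PQ mxrank1.
  rewrite /row_free mxrankMfree //.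
  have -> : \rank (R *m M) = \rank M.
    have Rf : row_full R by rewrite row_full_unit.
    by rewrite (eqmxMfull _ Rf).
  exact: hrf.
- move=> i j; rewrite symp_rows key.
  have -> : R *m M *m P *m Q = R *m M by rewrite -(mulmxA (R *m M)) PQ mulmx1.
  have -> : R *m M *m Jmx N *m M^T = R *m (M *m Jmx N *m M^T) by rewrite !mulmxA.
  by rewrite MJ mulmx0 mul0mx mxE.
- split.
    have uQ : u *m P *m Q = u by rewrite -mulmxA PQ mulmx1.
    exists (u *m P); split; first by apply/normE; rewrite uQ.
    by split; [rewrite stabE uQ | rewrite -wE uQ].
  move=> u' h1 h2; rewrite -wE; apply: hlow; first by apply/normE.
  by rewrite -stabE.
Qed.

Lemma pweight_add N (e1 e2 : 'rV['F_2]_(N + N)) :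
  (pweight (e1 + e2) <= pweight e1 + pweight e2)%N.
Proof.
rewrite /pweight; apply: leq_trans (leq_card_setU _ _).
apply: subset_leq_card; apply/subsetP => j; rewrite !inE !mxE.
move: (e1 0 _) (e2 0 _) (e1 0 _) (e2 0 _) => a b c e.
apply: contraLR; rewrite !negb_or !negbK => /and3P[/andP[/eqP-> /eqP->] /eqP-> /eqP->].
by rewrite !addr0 eqxx.
Qed.

Lemma pweight0 N (u : 'rV['F_2]_(N + N)) : pweight u = 0%N -> u = 0.
Proof.
move/eqP; rewrite /pweight cards_eq0 => /eqP h.
apply/matrixP => i t; rewrite ord1 mxE; rewrite -[t]splitK.
by case: (split t) => j /=; move/setP/(_ j): h; rewrite !inE !mxE;
  move/norP => [/negbNE/eqP ? /negbNE/eqP ?].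
Qed.


Lemma stab_d_pos m N k d (M : 'M['F_2]_(m, N + N)) :
  stab_code N k d M -> (0 < d)%N.
Proof.
case=> _ _ _ _ [[u [_ [hs hw]]] _]; rewrite lt0n; apply/eqP => d0.
have hu : u = 0 by apply: pweight0; rewrite hw d0.
by apply: hs; rewrite hu /in_stab sub0mx.
Qed.

Lemma stab_corrects m N k d (M : 'M['F_2]_(m, N + N)) :
  stab_code N k d M -> corrects M ((d - 1) %/ 2).
Proof.
move=> hc; have dpos := stab_d_pos hc; case: hc => _ _ _ _ [_ hlow].
move=> e1 e2 h1 h2 hn; rewrite /in_stab.
case: (boolP ((e1 + e2)%R <= M)%MS) => hs; first by [].
exfalso.
have := hlow _ hn (fun h => negP hs h); have := pweight_add e1 e2.
lia.
Qed.

Lemma pid_col r q : col_mx 1%:M 0 = pid_mx r :> 'M['F_2]_(r + q, r).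
Proof.
apply/matrixP => i j; rewrite !mxE; case: splitP => i' -> /=; rewrite !mxE.
  by rewrite andbT.
by rewrite andbF.
Qed.

Lemma exists_pid m r (A : 'M['F_2]_(m, r)) :
  \rank A = r -> exists2 R : 'M['F_2]_m, R \in unitmx & R *m A = pid_mx r.
Proof.
move=> hA; have rm : (r <= m)%N by rewrite -hA rank_leq_row.
move: A hA; rewrite -(subnKC rm); move: (m - r)%N => q A hA.
have hE := mulmx_ebase A; rewrite hA in hE.
set L := col_ebase A in hE; set U := row_ebase A in hE.
have Lu : L \in unitmx by apply: col_ebase_unit.
have Uu : U \in unitmx by apply: row_ebase_unit.
exists (block_mx (invmx U) 0 0 1%:M *m invmx L).
  rewrite unitmx_mul unitmx_inv Lu andbT unitmxE det_ublock det1 mulr1.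
  by rewrite -unitmxE unitmx_inv.
rewrite -hE -!mulmxA mulKmx // -pid_col mulmxA mul_block_col.
rewrite !mulmx1 !mulmx0 !addr0 ?add0r mul_col_mx mulVmx // mul0mx.
by rewrite pid_col.
Qed.

Lemma pweight_le N (u : 'rV['F_2]_(N + N)) : (pweight u <= N)%N.
Proof. by rewrite /pweight -[X in (_ <= X)%N]card_ord max_card. Qed.

Lemma pweight_J N (x : 'rV['F_2]_(N + N)) : pweight (x *m Jmx N) = pweight x.
Proof.
rewrite /pweight mulJ row_mxKl row_mxKr; apply: eq_card => j; by rewrite !inE orbC.
Qed.

Lemma PtP N N' (f : 'I_N' -> 'I_N) : injective f -> (Pmx f)^T *m Pmx f = 1%:M.
Proof.
move=> fi; apply/matrixP => t t'; rewrite !mxE.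
rewrite (sum_delta (fun a => (Pmx f)^T t a) (k0 := liftq f t')); first last.
- by rewrite mxE eqxx.
- by move=> a /negbTE ha; rewrite mxE ha.
by rewrite !mxE (inj_eq (liftq_inj fi)) eq_sym.
Qed.

Lemma pweight_Pt N N' (f : 'I_N' -> 'I_N) (w : 'rV['F_2]_(N' + N')) :
  (pweight (w *m (Pmx f)^T) <= N')%N.
Proof.
rewrite /pweight; apply: leq_trans (_ : (#|f @: [set: 'I_N']| <= N')%N); last first.
  by apply: leq_trans (leq_imset_card _ _) _; rewrite cardsT card_ord.
apply: subset_leq_card; apply/subsetP => j; rewrite inE.
apply: contraLR => /imsetP hj.
have hl : forall t, (lshift N j == liftq f t) = false.
  move=> t; rewrite -[t]splitK; case: (split t) => l /=.
    rewrite liftq_l (inj_eq (@lshift_inj _ _)); apply/negbTE/eqP => e.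
    by apply: hj; exists l; rewrite ?inE.
  rewrite liftq_r; apply/negbTE/eqP => /(congr1 val) /= e.
  by have := ltn_ord j; lia.
have hr : forall t, (rshift N j == liftq f t) = false.
  move=> t; rewrite -[t]splitK; case: (split t) => l /=.
    rewrite liftq_l; apply/negbTE/eqP => /(congr1 val) /= e.
    by have := ltn_ord (f l); lia.
  rewrite liftq_r (inj_eq (@rshift_inj _ _)); apply/negbTE/eqP => e.
  by apply: hj; exists l; rewrite ?inE.
rewrite !mxE !big1 ?eqxx // => t _; rewrite !mxE ?hl ?hr mulr0 //.
Qed.

Lemma qperm1 m n (H : 'M['F_2]_(m, n + n)) : qperm 1 H = H.
Proof. by rewrite /qperm !col_perm1 hsubmxK. Qed.

Lemma nondeg_part n k d (H : 'M['F_2]_(n - k, n + n)) :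
  stab_code n k d H -> nondegenerate_code H d ->
  exists (s : nat) (R : 'M['F_2]_(n - k)) (p : 'S_n),
    [/\ R \in unitmx, std_form s (R *m qperm p H) & (d - 1 <= s <= (n - k) %/ 2)%N].
Proof.
move=> hc hnd; have dpos := stab_d_pos hc.
have dn : (d <= n)%N.
  by case: hc => _ _ _ _ [[u [_ [_ <-]]] _]; apply: pweight_le.
set s := (d - 1)%N; have hsn : (s <= n)%N by rewrite /s; lia.
pose q (l : 'I_s) : 'I_n := cast_ord (subnK hsn) (rshift (n - s) l).
have qv : forall l, nat_of_ord (q l) = (n - s + l)%N by [].
have qi : injective q by move=> l1 l2 /(congr1 (@nat_of_ord _)); rewrite !qv => e; apply/val_inj => /=; lia.
set A := H *m Pmx q.
have rA : \rank A = (s + s)%N.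
  rewrite -mxrank_tr; apply/eqP; rewrite -[X in _ == X]/(s + s)%N.
  rewrite -/(row_free _) -kermx_eq0; apply/negPn/negP => /rowV0Pn [w].
  rewrite sub_kermx => /eqP hw wn0.
  set u := w *m (Pmx q)^T *m Jmx n.
  have un : in_norm H u.
    apply/in_normE; rewrite /u -(mulmxA (w *m (Pmx q)^T)) JJ mulmx1 -mulmxA -trmx_mul.
    exact: hw.
  have u0 : u != 0.
    apply: contra wn0 => /eqP u0; apply/eqP.
    have : u *m Jmx n = 0 by rewrite u0 mul0mx.
    rewrite /u -mulmxA JJ mulmx1 => e.
    by rewrite -[w]mulmx1 -(PtP qi) mulmxA e mul0mx.
  have := hnd _ un u0; rewrite /u pweight_J.
  have := pweight_Pt q w; have : s = (d - 1)%N by [].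
  move=> hs h1 h2; have := leq_trans h2 h1; rewrite hs; lia.
have [R Ru RA] := exists_pid rA.
have hm : (s + s <= n - k)%N by rewrite -rA rank_leq_row.
exists s, R, 1%g; split => //; last first.
  by apply/andP; split; [rewrite leqnn | lia].
rewrite qperm1; split; first by rewrite mul2n -addnn.
have E : forall i t, (R *m H) i (liftq q t) = pid_mx (s + s) i t.
  by move=> i t; rewrite -RA /A mulmxA mul_Pmx.
move=> i j hj.
have hl : (j - (n - s) < s)%N by have := ltn_ord j; lia.
have qj : q (Ordinal hl) = j by apply: ord_inj; rewrite qv /=; lia.
have Ll : (R *m H) i (lshift n j) = pid_mx (s + s) i (lshift s (Ordinal hl)).
  by rewrite -E liftq_l qj.
have Lr : (R *m H) i (rshift n j) = pid_mx (s + s) i (rshift s (Ordinal hl)).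
  by rewrite -E liftq_r qj.
rewrite [lsubmx _ _ _]mxE [rsubmx _ _ _]mxE Ll Lr !mxE /=.
split; congr (_ %:R).
  by rewrite andb_idr // => /eqP ->; lia.
congr (nat_of_bool _); apply/andP/andP => [[/eqP -> _]|[h1 /eqP h2]]; split.
- lia.
- by apply/eqP; lia.
- by apply/eqP; lia.
- lia.
Qed.

Definition sig (s c k : nat) : nat :=
  if (k < s - c)%N then (k + 2 * c)%N else if (k < s)%N then (k + 2 * c - s)%N
  else if (k < 2 * s - c)%N then (k + c)%N else if (k < 2 * s)%N then (k - (2 * s - c))%N else k.
Lemma sig_lt s c m k : (c <= s)%N -> (2 * s <= m)%N -> (k < m)%N -> (sig s c k < m)%N.
Proof. rewrite /sig; repeat case: ifP; lia. Qed.
Lemma sig_inj s c k1 k2 : (c <= s)%N -> sig s c k1 = sig s c k2 -> k1 = k2.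
Proof. rewrite /sig; repeat case: ifP; lia. Qed.

Lemma qpermE m n (p : 'S_n) (H : 'M['F_2]_(m, n + n)) : qperm p H = H *m Pmx p.
Proof.
apply/matrixP => i t; rewrite mul_Pmx /qperm -[t]splitK.
case: (split t) => j /=.
  by rewrite liftq_l row_mxEl !mxE.
by rewrite liftq_r row_mxEr !mxE.
Qed.

Lemma del_lastE m n c (X : 'M['F_2]_(m, n + n)) :
  del_last c X = X *m Pmx (widen_ord (leq_subr c n)).
Proof.
apply/matrixP => i t; rewrite mul_Pmx /del_last -[t]splitK.
case: (split t) => j /=.
  by rewrite liftq_l row_mxEl !mxE.
by rewrite liftq_r row_mxEr !mxE.
Qed.

Lemma ea_ll m n' c (X : 'M['F_2]_(m, n' + n')) i j :
  ea_ext c X i (lshift _ (lshift _ j)) = X i (lshift _ j).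
Proof. by rewrite /ea_ext !row_mxEl mxE. Qed.
Lemma ea_lr m n' c (X : 'M['F_2]_(m, n' + n')) i j :
  ea_ext c X i (lshift _ (rshift _ j)) = (i == (c + j)%N :> nat)%:R.
Proof. by rewrite /ea_ext row_mxEl row_mxEr mxE. Qed.
Lemma ea_rl m n' c (X : 'M['F_2]_(m, n' + n')) i j :
  ea_ext c X i (rshift _ (lshift _ j)) = X i (rshift _ j).
Proof. by rewrite /ea_ext row_mxEr row_mxEl mxE. Qed.
Lemma ea_rr m n' c (X : 'M['F_2]_(m, n' + n')) i j :
  ea_ext c X i (rshift _ (rshift _ j)) = (i == j :> nat)%:R.
Proof. by rewrite /ea_ext !row_mxEr mxE. Qed.

Lemma symp_rowsE N p r (X : 'M['F_2]_(p, N + N)) (Y : 'M['F_2]_(r, N + N)) i j :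
  symp (row i X) (row j Y) =
  \sum_(t < N) (X i (lshift N t) * Y j (rshift N t) + X i (rshift N t) * Y j (lshift N t)).
Proof. by apply: eq_bigr => t _; rewrite !mxE. Qed.

Lemma sum_pick c x (F : nat -> 'F_2) :
  \sum_(t < c) F t * (x == t :> nat)%:R = (x < c)%N%:R * F x.
Proof.
case: (ltnP x c) => h.
  rewrite (sum_delta (fun t : 'I_c => F t) (k0 := Ordinal h)) ?mul1r //=; last by rewrite eqxx.
  by move=> t ht; rewrite (_ : (x == t) = false) //; apply/negbTE; apply: contra ht => /eqP e; apply/eqP/ord_inj.
rewrite mul0r big1 // => t _; rewrite (_ : (x == t) = false) ?mulr0 //.
by apply/negbTE/eqP => e; have := ltn_ord t; lia.
Qed.

Lemma symp_ea m n' c (X : 'M['F_2]_(m, n' + n')) (i j : 'I_m) :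
  symp (row i (ea_ext c X)) (row j (ea_ext c X)) =
  symp (row i X) (row j X) +
  ((j < c)%N%:R * (i == (c + j)%N :> nat)%:R + (i < c)%N%:R * (j == (c + i)%N :> nat)%:R).
Proof.
rewrite !symp_rowsE big_split_ord /=; congr (_ + _).
  by apply: eq_bigr => t _; rewrite !ea_ll !ea_rl.
rewrite (eq_bigr (fun t : 'I_c => (i == (c + t)%N :> nat)%:R * (j == t :> nat)%:R
   + (j == (c + t)%N :> nat)%:R * (i == t :> nat)%:R)); last first.
  by move=> t _; rewrite !ea_lr !ea_rr [X in _ + X]mulrC.
by rewrite big_split /= !(sum_pick c _ (fun t => (_ == (c + t)%N :> nat)%:R)).
Qed.

Lemma bob_eq m c (i j : 'I_m) :
  (j < c)%N%:R * (i == (c + j)%N :> nat)%:R + (i < c)%N%:R * (j == (c + i)%N :> nat)%:R =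
  ((((i < c)%N) && (j == (i + c)%N :> nat)) || (((j < c)%N) && (i == (j + c)%N :> nat)))%:R :> 'F_2.
Proof.
rewrite !(addnC c).
have : ~~ ((((j < c)%N) && (i == (j + c)%N :> nat)) && (((i < c)%N) && (j == (i + c)%N :> nat))).
  by apply/negP => /andP[/andP[? /eqP ?] /andP[? /eqP ?]]; lia.
by case: (j < c)%N; case: (i == (j + c)%N :> nat); case: (i < c)%N; case: (j == (i + c)%N :> nat);
  rewrite /= ?mulr1 ?mul1r ?mulr0 ?mul0r ?addr0 ?add0r.
Qed.

Lemma part2 n k d (H : 'M['F_2]_(n - k, n + n)) : stab_code n k d H ->
  forall (s : nat) (R : 'M['F_2]_(n - k)) (p : 'S_n),
    R \in unitmx -> std_form s (R *m qperm p H) ->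
    forall c : nat, (c <= s)%N ->
      exists T : 'M['F_2]_(n - k),
        eaqec_AB_via (n - c) k d c (del_last c (R *m qperm p H)) T /\
        corrects (ea_ext c (T *m del_last c (R *m qperm p H))) ((d - 1) %/ 2).
Proof.
move=> hc s R p Ru [h2s hstd] c hcs.
set H' := R *m qperm p H.
have hc' : stab_code n k d H'.
  rewrite /H' qpermE mulmxA; apply: (transport (g := (p^-1)%g)) => //.
    exact: permK.
  exact: permKV.
have hcn : (c <= n)%N by lia.
have e : (n - c + c = n)%N by rewrite subnK.
pose sg (k0 : 'I_(n - k)) : 'I_(n - k) := Ordinal (sig_lt hcs h2s (ltn_ord k0)).
have sgi : injective sg.
  by move=> a b /(congr1 (@nat_of_ord _)) /= /(sig_inj hcs) /ord_inj.
pose T : 'M['F_2]_(n - k) := (perm_mx (perm sgi))^T.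
have Tu : T \in unitmx by rewrite unitmx_tr unitmx_perm.
have TE : forall i k0, T i k0 = (sig s c k0 == i :> nat)%:R.
  by move=> i k0; rewrite !mxE permE.
set G := del_last c H'.
have EA : ea_ext c (T *m G) = T *m H' *m Pmx (cast_ord e).
  apply/matrixP => i t; rewrite mul_Pmx -[t]splitK; case: (split t) => t1 /=;
    rewrite -[t1]splitK; case: (split t1) => j /=.
  - rewrite ea_ll /G del_lastE mulmxA mul_Pmx liftq_l (@liftq_l n (n - c + c)).
    by rewrite (_ : widen_ord _ j = cast_ord e (lshift c j)) //; apply: ord_inj.
  - rewrite ea_lr (@liftq_l n (n - c + c)).
    set jj := cast_ord e (rshift (n - c) j).
    have jjv : nat_of_ord jj = (n - c + j)%N by [].
    have hjj : (n - s <= jj)%N by rewrite jjv; lia.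
    have hk0 : (s - c + j < n - k)%N by have := ltn_ord j; lia.
    rewrite mxE (sum_delta (fun k0 => T i k0) (k0 := Ordinal hk0)).
    + rewrite TE (_ : sig s c (s - c + j) = (c + j)%N) 1?eq_sym //.
      by have := ltn_ord j; rewrite /sig; repeat case: ifP; lia.
    + move=> k0 hk; have [hL _] := hstd k0 jj hjj; rewrite mxE in hL; rewrite hL.
      rewrite (_ : (_ == _) = false) //; apply: contraNF hk => /eqP h.
      by apply/eqP/ord_inj => /=; rewrite h jjv; lia.
    + have [hL _] := hstd (Ordinal hk0) jj hjj; rewrite mxE in hL; rewrite hL.
      by rewrite (_ : (_ == _) = true) //; apply/eqP; rewrite jjv /=; lia.
  - rewrite ea_rl /G del_lastE mulmxA mul_Pmx liftq_r (@liftq_r n (n - c + c)).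
    by rewrite (_ : widen_ord _ j = cast_ord e (lshift c j)) //; apply: ord_inj.
  - rewrite ea_rr (@liftq_r n (n - c + c)).
    set jj := cast_ord e (rshift (n - c) j).
    have jjv : nat_of_ord jj = (n - c + j)%N by [].
    have hjj : (n - s <= jj)%N by rewrite jjv; lia.
    have hk0 : (2 * s - c + j < n - k)%N by have := ltn_ord j; lia.
    rewrite mxE (sum_delta (fun k0 => T i k0) (k0 := Ordinal hk0)).
    + rewrite TE (_ : sig s c (2 * s - c + j) = j) 1?eq_sym //.
      by have := ltn_ord j; rewrite /sig; repeat case: ifP; lia.
    + move=> k0 hk; have [_ hR] := hstd k0 jj hjj; rewrite mxE in hR; rewrite hR.
      rewrite (_ : (_ && _) = false) //; apply: contraNF hk => /andP[h1 /eqP h].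
      by apply/eqP/ord_inj => /=; move: h; rewrite jjv; lia.
    + have [_ hR] := hstd (Ordinal hk0) jj hjj; rewrite mxE in hR; rewrite hR.
      by rewrite (_ : (_ && _) = true) //; apply/andP; split; [|apply/eqP]; rewrite ?jjv /=; lia.
have hcM : stab_code (n - c + c) k d (ea_ext c (T *m G)).
  rewrite EA; apply: (transport (g := cast_ord (esym e))) => //.
  - exact: cast_ordK.
  - exact: cast_ordKV.
exists T; split; last exact: stab_corrects hcM.
split => //; split; first lia.
move=> i j; case: hcM => _ _ _ hcom _.
by have := hcom i j; rewrite symp_ea bob_eq => /F2_add_eq0.
Qed.

Unset Implicit Arguments.

Theorem theorem1 (n k d : nat) (H : 'M['F_2]_(n - k, n + n)) :
  stab_code n k d H ->
  [/\ (* H can be brought to standard form *)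
      (exists (s : nat) (R : 'M['F_2]_(n - k)) (p : 'S_n),
          R \in unitmx /\ std_form s (R *m qperm p H)),
      (* every standard form yields EAQEC codes by deleting columns *)
      (forall (s : nat) (R : 'M['F_2]_(n - k)) (p : 'S_n),
          R \in unitmx -> std_form s (R *m qperm p H) ->
          forall c : nat, (c <= s)%N ->
            exists T : 'M['F_2]_(n - k),
              eaqec_AB_via (n - c) k d c (del_last c (R *m qperm p H)) T /\
              corrects (ea_ext c (T *m del_last c (R *m qperm p H))) ((d - 1) %/ 2))
    & (* nondegenerate_code case: a standard form with d - 1 <= s <= (n - k)/2 *)
      (nondegenerate_code H d ->
        exists (s : nat) (R : 'M['F_2]_(n - k)) (p : 'S_n),
          [/\ R \in unitmx, std_form s (R *m qperm p H) &
              (d - 1 <= s <= (n - k) %/ 2)%N])].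
Proof.
move=> hc; split.
- exists 0%N, 1%:M, 1%g; split; first exact: unitmx1.
  split => // i j; rewrite subn0 => h; by have := ltn_ord j; lia.
- exact: part2.
- exact: nondeg_part.
Qed.
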